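(* Let $M$ be a free $\mathbb{T}$-module with a finite $\mathbb{T}$-basis, $V$ its associated complex vector space, and $(\cdot,\cdot)$ a bicomplex scalar product on $M$ which is hyperbolic positive and closed on $V$. Then for every $\widehat X\in M$ and $k=1,2$, $$P_k\big((\widehat X,\widehat X)\big)=(\widehat X_{\mathbf{e_k}},\widehat X_{\mathbf{e_k}})=\|\widehat X_{\mathbf{e_k}}\|^2 .$$
   Context: Bicomplex numbers: $\mathbb{T}=\{z_1+z_2\mathbf{i_2}: z_1,z_2\in\mathbb{C}(\mathbf{i_1})\}$, $\mathbb{C}(\mathbf{i_1})=\{x+y\mathbf{i_1}: x,y\in\mathbb{R}\}$, $\mathbf{i_1}^2=\mathbf{i_2}^2=-1$, $\mathbf{i_1}\mathbf{i_2}=\mathbf{i_2}\mathbf{i_1}=\mathbf{j}$, $\mathbf{j}^2=1$ (commutative). Hyperbolic numbers $\mathbb{D}=\{x+y\mathbf{j}:x,y\in\mathbb{R}\}$. Idempotents $\mathbf{e_1}=(1+\mathbf{j})/2$, $\mathbf{e_2}=(1-\mathbf{j})/2$. Every $w=z_1+z_2\mathbf{i_2}$ is uniquely $w=(z_1-z_2\mathbf{i_1})\mathbf{e_1}+(z_1+z_2\mathbf{i_1})\mathbf{e_2}$; set $P_1(w)=z_1-z_2\mathbf{i_1}$, $P_2(w)=z_1+z_2\mathbf{i_1}$. Conjugation: $(z_1+z_2\mathbf{i_2})^{\dagger_3}=\overline{z_1}-\overline{z_2}\mathbf{i_2}$. $\mathbb{D}^+=\{a\mathbf{e_1}+b\mathbf{e_2}: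 a,b\ge 0\}$. $M$ has $\mathbb{T}$-basis $\{\widehat m_1,\dots,\widehat m_n\}$, $V=\{\sum x_l\widehat m_l: x_l\in\mathbb{C}(\mathbf{i_1})\}$; for $\widehat X=\sum x_l\widehat m_l$ with $x_l=x_{1l}\mathbf{e_1}+x_{2l}\mathbf{e_2}$, $x_{kl}\in\mathbb{C}(\mathbf{i_1})$, put $\widehat X_{\mathbf{e_k}}=\sum_l x_{kl}\widehat m_l\in V$. A bicomplex scalar product is a map $(\cdot,\cdot):M\times M\to\mathbb{T}$ with: $(\widehat X,\widehat Y_1+\widehat Y_2)=(\widehat X,\widehat Y_1)+(\widehat X,\widehat Y_2)$; $(\widehat X,\alpha\widehat Y)=\alpha(\widehat X,\widehat Y)$ for $\alpha\in\mathbb{T}$; $(\widehat X,\widehat Y)=(\widehat Y,\widehat X)^{\dagger_3}$; $(\widehat X,\widehat X)=0\iff\widehat X=0$. Hyperbolic positive: $(\widehat X,\widehat X)\in\mathbb{D}^+$ for all $\widehat X$. Closed on $V$: $(\widehat X,\widehat Y)\in\mathbb{C}(\mathbf{i_1})$ for $\widehat X,\widehat Y\in V$. For $\widehat Z\in V$, $\|\widehat Z\|=(\widehat Z,\widehat Z)^{1/2}$. *)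

(* Defs.v *)
From HB Require Import structures.
From mathcomp Require Import all_boot all_order all_algebra.
From mathcomp Require Import complex reals.
From mathcomp Require Import ring.
Set Implicit Arguments. Unset Strict Implicit. Unset Printing Implicit Defensive.
Import Order.TTheory GRing.Theory Num.Theory.
Local Open Scope ring_scope.

(** * Bicomplex numbers  T = { z1 + z2 i2 : z1, z2 in C(i1) } *)
Record bicomplex (R : realType) := BiC { bc1 : R[i]; bc2 : R[i] }.
Arguments BiC {R}.

Section Bicomplex.
Variable R : realType.
Local Notation C := R[i].
Local Notation T := (bicomplex R).

Definition bc_pair (w : T) : C * C := (bc1 w, bc2 w).
Definition pair_bc (p : C * C) : T := BiC p.1 p.2.
Lemma bc_pairK : cancel bc_pair pair_bc. Proof. by case. Qed.

HB.instance Definition _ := Equality.copy T (can_type bc_pairK).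
HB.instance Definition _ := Choice.copy T (can_type bc_pairK).

Definition bc_zero : T := BiC 0 0.
Definition bc_add (w v : T) : T := BiC (bc1 w + bc1 v) (bc2 w + bc2 v).
Definition bc_opp (w : T) : T := BiC (- bc1 w) (- bc2 w).
(* (z1 + z2 i2)(w1 + w2 i2) = (z1 w1 - z2 w2) + (z1 w2 + z2 w1) i2 *)
Definition bc_mul (w v : T) : T :=
  BiC (bc1 w * bc1 v - bc2 w * bc2 v) (bc1 w * bc2 v + bc2 w * bc1 v).
Definition bc_one : T := BiC 1 0.

Lemma bc_addA : associative bc_add.
Proof. by move=> [a b] [c d] [e f]; rewrite /bc_add /=; congr BiC; ring. Qed.
Lemma bc_addC : commutative bc_add.
Proof. by move=> [a b] [c d]; rewrite /bc_add /=; congr BiC; ring. Qed.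
Lemma bc_add0 : left_id bc_zero bc_add.
Proof. by move=> [a b]; rewrite /bc_add /=; congr BiC; ring. Qed.
Lemma bc_addN : left_inverse bc_zero bc_opp bc_add.
Proof. by move=> [a b]; rewrite /bc_add /bc_zero /=; congr BiC; ring. Qed.

HB.instance Definition _ := GRing.isZmodule.Build T bc_addA bc_addC bc_add0 bc_addN.

Lemma bc_mulA : associative bc_mul.
Proof. by move=> [a b] [c d] [e f]; rewrite /bc_mul /=; congr BiC; ring. Qed.
Lemma bc_mulC : commutative bc_mul.
Proof. by move=> [a b] [c d]; rewrite /bc_mul /=; congr BiC; ring. Qed.
Lemma bc_mul1 : left_id bc_one bc_mul.
Proof. by move=> [a b]; rewrite /bc_mul /=; congr BiC; ring. Qed.
Lemma bc_mulDl : left_distributive bc_mul (+%R : T -> T -> T).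
Proof.
move=> [a b] [c d] [e f].
rewrite /bc_mul; congr BiC; rewrite /= ; ring.
Qed.
Lemma bc_one_neq0 : bc_one != 0.
Proof.
apply/negP => /eqP/(congr1 (@bc1 R)) /= /eqP. by rewrite oner_eq0.
Qed.

HB.instance Definition _ :=
  GRing.Zmodule_isComNzRing.Build T bc_mulA bc_mulC bc_mul1 bc_mulDl bc_one_neq0.

Definition bc_of (z : C) : T := BiC z 0.
Definition bc_i1 : T := BiC 'i%C 0.
Definition bc_i2 : T := BiC 0 1.
Definition bc_j : T := bc_i1 * bc_i2.
Definition bc_e1 : T := bc_of (2^-1) * (1 + bc_j).
Definition bc_e2 : T := bc_of (2^-1) * (1 - bc_j).
(** idempotent components: w = P1(w) e1 + P2(w) e2 *)
Definition P1 (w : T) : C := bc1 w - bc2 w * 'i%C.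
Definition P2 (w : T) : C := bc1 w + bc2 w * 'i%C.
Definition conj3 (w : T) : T := BiC ((bc1 w)^*)%C (- (bc2 w)^*)%C.
Definition bc_real (x : R) : T := bc_of (x%:C)%C.
Definition hyp_pos (w : T) : Prop :=
  exists a b : R, 0 <= a /\ 0 <= b /\ w = bc_real a * bc_e1 + bc_real b * bc_e2.
Definition in_Ci1 (w : T) : Prop := exists z : C, w = bc_of z.
Definition hsqrt (w : T) : T :=
  bc_real (Num.sqrt (complex.Re (P1 w))) * bc_e1
  + bc_real (Num.sqrt (complex.Re (P2 w))) * bc_e2.
End Bicomplex.

Section Module.
Variables (R : realType) (M : lmodType (bicomplex R)) (n : nat) (m : 'I_n -> M).

Definition is_Tbasis : Prop :=
  (forall x : 'I_n -> bicomplex R, \sum_l x l *: m l = 0 -> forall l, x l = 0)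
  /\ (forall X : M, exists x : 'I_n -> bicomplex R, X = \sum_l x l *: m l).

Definition in_V (X : M) : Prop :=
  exists x : 'I_n -> R[i], X = \sum_l bc_of (x l) *: m l.

(** X_{e_k} for X = sum_l x_l m_l : components P_k(x_l) *)
Definition comp_e1 (x : 'I_n -> bicomplex R) : M := \sum_l bc_of (P1 (x l)) *: m l.
Definition comp_e2 (x : 'I_n -> bicomplex R) : M := \sum_l bc_of (P2 (x l)) *: m l.

Variable sp : M -> M -> bicomplex R.

Definition bicomplex_scalar_product : Prop :=
  [/\ forall X Y1 Y2, sp X (Y1 + Y2) = sp X Y1 + sp X Y2,
      forall X Y (a : bicomplex R), sp X (a *: Y) = a * sp X Y,
      forall X Y, sp X Y = conj3 (sp Y X)
    & forall X, sp X X = 0 <-> X = 0].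

Definition hyperbolic_positive : Prop := forall X, hyp_pos (sp X X).

Definition closed_on_V : Prop := forall X Y, in_V X -> in_V Y -> in_Ci1 (sp X Y).

Definition bnorm (Z : M) : bicomplex R := hsqrt (sp Z Z).
End Module.

(* Main.v *)
Require Import Defs.
From HB Require Import structures.
From mathcomp Require Import all_boot all_order all_algebra.
From mathcomp Require Import complex reals.
From mathcomp Require Import ring.
Import Order.TTheory GRing.Theory Num.Theory.
Local Open Scope ring_scope.
Local Open Scope complex_scope.

Section Aux.
Variable R : realType.
Local Notation C := R[i].
Local Notation T := (bicomplex R).

Lemma bcE_mul (w v : T) : w * v =
  BiC (bc1 w * bc1 v - bc2 w * bc2 v) (bc1 w * bc2 v + bc2 w * bc1 v).
Proof. by []. Qed.
Lemma bcE_add (w v : T) : w + v = BiC (bc1 w + bc1 v) (bc2 w + bc2 v).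
Proof. by []. Qed.
Lemma bcE_opp (w : T) : - w = BiC (- bc1 w) (- bc2 w).
Proof. by []. Qed.
Lemma bc1E (a b : C) : bc1 (BiC a b) = a. Proof. by []. Qed.
Lemma bc2E (a b : C) : bc2 (BiC a b) = b. Proof. by []. Qed.
Lemma conj3E (w : T) : conj3 w = BiC (conjc (bc1 w)) (- conjc (bc2 w)).
Proof. by []. Qed.
Lemma bcE_one : (1 : T) = BiC 1 0. Proof. by []. Qed.
Lemma bcE_zero : (0 : T) = BiC 0 0. Proof. by []. Qed.

Lemma ii : 'i%C * 'i%C = -1 :> C.
Proof. by apply/eqP; rewrite eq_complex /= !mul0r mulr0 mulr1 sub0r addr0 oppr0 !eqxx. Qed.

Lemma conji : conjc ('i%C : C) = - 'i%C.
Proof. by apply/eqP; rewrite eq_complex /= oppr0 !eqxx. Qed.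

Lemma two_neq0 : (2 : C) != 0.
Proof.
have -> : (2 : C) = (2 : R)%:C by rewrite rmorph_nat.
by apply/negP => /eqP/complexI/eqP; rewrite pnatr_eq0.
Qed.

Lemma h2 : (2^-1 : C) * 2 = 1.
Proof. by rewrite mulVf // two_neq0. Qed.

Lemma h_real : (2^-1 : C) = (2^-1 : R)%:C.
Proof. by rewrite fmorphV rmorph_nat. Qed.

Lemma conjh : conjc (2^-1 : C) = 2^-1.
Proof. by rewrite h_real conjc_real. Qed.

Lemma cjN (b : C) : conjc (- b) = - conjc b. Proof. by case: b => x y /=; simpc. Qed.
Lemma cjD (a b : C) : conjc (a + b) = conjc a + conjc b. Proof. by case: a b => x y [z w] /=; simpc. Qed.
Lemma cjB (a b : C) : conjc (a - b) = conjc a - conjc b. Proof. by case: a b => x y [z w] /=; simpc; congr (_ +i* _); ring. Qed.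
Lemma cjM (a b : C) : conjc (a * b) = conjc a * conjc b. Proof. by case: a b => x y [z w] /=; simpc. Qed.
Lemma cjK (a : C) : conjc (conjc a) = a. Proof. by case: a => x y /=; rewrite opprK. Qed.
Lemma cj1 : conjc (1 : C) = 1. Proof. by apply/eqP; rewrite eq_complex /= oppr0 !eqxx. Qed.
Lemma cj0 : conjc (0 : C) = 0. Proof. by apply/eqP; rewrite eq_complex /= oppr0 !eqxx. Qed.

Ltac bcsimpl := rewrite /bc_e1 /bc_e2 /bc_j /bc_i1 /bc_i2 /bc_of /P1 /P2; rewrite ?conj3E;
  rewrite ?bcE_mul ?bcE_add ?bcE_opp ?bcE_one ?bcE_zero ?bc1E ?bc2E.

Ltac bcring := generalize (h2) (ii); generalize (2^-1 : C);
  let h := fresh in let H1 := fresh in let H2 := fresh in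
  intros h H1 H2; ring: H1 H2.

Lemma conj3_mul (w v : T) : conj3 (w * v) = conj3 w * conj3 v.
Proof.
case: w v => a b [c d]; rewrite !conj3E !bcE_mul /=; congr BiC;
rewrite ?cjB ?cjD !cjM; ring.
Qed.

Lemma conj3_add (w v : T) : conj3 (w + v) = conj3 w + conj3 v.
Proof.
case: w v => a b [c d]; rewrite !conj3E !bcE_add /=; congr BiC;
rewrite ?cjD; ring.
Qed.

Lemma conj3K (w : T) : conj3 (conj3 w) = w.
Proof. by case: w => a b; rewrite !conj3E /= cjN !cjK opprK. Qed.

Lemma conj3_e1 : conj3 (bc_e1 R) = bc_e1 R.
Proof.
bcsimpl; congr BiC; rewrite ?(cjB, cjD, cjM, cjN, cj1, cj0, conji, conjh);
ring.
Qed.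

Lemma conj3_e2 : conj3 (bc_e2 R) = bc_e2 R.
Proof.
bcsimpl; congr BiC; rewrite ?(cjB, cjD, cjM, cjN, cj1, cj0, conji, conjh);
ring.
Qed.

Lemma e11 : bc_e1 R * bc_e1 R = bc_e1 R.
Proof. bcsimpl; congr BiC; bcring. Qed.
Lemma e12 : bc_e1 R * bc_e2 R = 0.
Proof. bcsimpl; congr BiC; bcring. Qed.
Lemma e1pe2 : bc_e1 R + bc_e2 R = 1.
Proof. bcsimpl; congr BiC; bcring. Qed.

Lemma e22 : bc_e2 R * bc_e2 R = bc_e2 R.
Proof.
have -> : bc_e2 R = 1 - bc_e1 R by rewrite -e1pe2 addrAC subrr add0r.
by rewrite mulrBl mul1r mulrBr mulr1 e11 subrr subr0.
Qed.

Lemma decomp (w : T) : w = bc_e1 R * bc_of (P1 w) + bc_e2 R * bc_of (P2 w).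
Proof.
case: w => a b; bcsimpl; congr BiC; bcring.
Qed.

Lemma P1_lin (a b : C) : P1 (bc_e1 R * bc_of a + bc_e2 R * bc_of b) = a.
Proof. bcsimpl; bcring. Qed.
Lemma P2_lin (a b : C) : P2 (bc_e1 R * bc_of a + bc_e2 R * bc_of b) = b.
Proof. bcsimpl; bcring. Qed.

Lemma P_of (c : C) : P1 (bc_of c) = c /\ P2 (bc_of c) = c.
Proof. by rewrite /P1 /P2 /= mul0r subr0 addr0. Qed.

Lemma bc_ofM (a b : C) : bc_of a * bc_of b = bc_of (a * b) :> T.
Proof. by rewrite bcE_mul /bc_of /=; congr BiC; ring. Qed.

Lemma bc_ofD (a b : C) : bc_of a + bc_of b = bc_of (a + b) :> T.
Proof. by rewrite bcE_add /bc_of /=; congr BiC; ring. Qed.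
End Aux.

Theorem mainTheorem9 (R : realType) (M : lmodType (bicomplex R)) (n : nat)
    (m : 'I_n -> M) (sp : M -> M -> bicomplex R) :
  is_Tbasis m ->
  bicomplex_scalar_product sp ->
  hyperbolic_positive sp ->
  closed_on_V m sp ->
  forall (X : M) (x : 'I_n -> bicomplex R), X = \sum_l x l *: m l ->
    (bc_of (P1 (sp X X)) = sp (comp_e1 m x) (comp_e1 m x)
     /\ sp (comp_e1 m x) (comp_e1 m x) = bnorm sp (comp_e1 m x) ^+ 2)
 /\ (bc_of (P2 (sp X X)) = sp (comp_e2 m x) (comp_e2 m x)
     /\ sp (comp_e2 m x) (comp_e2 m x) = bnorm sp (comp_e2 m x) ^+ 2).
Proof.
move=> _ [Hadd Hscal Hsym _] Hpos Hcl X x HX.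
have spaddl : forall X1 X2 Y, sp (X1 + X2) Y = sp X1 Y + sp X2 Y.
  by move=> X1 X2 Y; rewrite Hsym Hadd conj3_add -!Hsym.
have spscl : forall a X1 Y, sp (a *: X1) Y = conj3 a * sp X1 Y.
  by move=> a X1 Y; rewrite Hsym Hscal conj3_mul -Hsym.
set X1 := comp_e1 m x; set X2 := comp_e2 m x.
have HXd : X = bc_e1 R *: X1 + bc_e2 R *: X2.
  rewrite HX /X1 /X2 /comp_e1 /comp_e2 !scaler_sumr -big_split /=.
  apply: eq_bigr => l _; rewrite !scalerA -scalerDl; congr (_ *: _).
  exact: decomp.
have [z1 Hz1] : in_Ci1 (sp X1 X1).
  by apply: Hcl; exists (fun l => P1 (x l)).
have [z2 Hz2] : in_Ci1 (sp X2 X2).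
  by apply: Hcl; exists (fun l => P2 (x l)).
have HXX : sp X X = bc_e1 R * bc_of z1 + bc_e2 R * bc_of z2.
  rewrite HXd !spaddl !Hadd !spscl !Hscal conj3_e1 conj3_e2 -Hz1 -Hz2.
  move: (e11 R) (e22 R) (e12 R); move: (bc_e1 R) (bc_e2 R) => a b Haa Hbb Hab.
  by rewrite !mulrA Haa Hbb Hab [b * a]mulrC Hab !mul0r addr0 add0r.
have norm2 : forall Y z, sp Y Y = bc_of z -> sp Y Y = bnorm sp Y ^+ 2.
  move=> Y z Hz; rewrite /bnorm.
  have [a [b [a0 [b0 Hab]]]] := Hpos Y.
  have Hza : z = a%:C.
    have := congr1 (@P1 R) Hab; rewrite Hz /bc_real mulrC [bc_of _ * bc_e2 R]mulrC.
    by rewrite P1_lin; case: (P_of _ z) => -> _.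
  rewrite Hz Hza /hsqrt; case: (P_of _ a%:C) => -> ->.
  rewrite /= -mulrDr e1pe2 mulr1 expr2 /bc_real bc_ofM -rmorphM.
  by rewrite -expr2 sqr_sqrtr.
split; split.
- by rewrite HXX P1_lin Hz1.
- exact: norm2 Hz1.
- by rewrite HXX P2_lin Hz2.
- exact: norm2 Hz2.
Qed.
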